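(* Let $k \ge 1$, $m = 4k+4$, $\theta = 2\pi/m$, and let $P$ be a finite point set in general position. For any two vertices $u, w \in P$, let $M$ be the midpoint of the side of $T_{uw}$ opposite $u$ and let $\alpha$ be the unsigned angle between $uw$ and $uM$. Then the $\theta_m$-graph on $P$ contains a path from $u$ to $w$ of length at most $$\left(\frac{\cos\alpha}{\cos(\theta/2)} + \frac{\cos\alpha\tan(\theta/2) + \sin\alpha}{\cos(\theta/2) - \sin(\theta/2)}\right)|uw|.$$
   Context: Cones: for $m \ge 2$, $\theta = 2\pi/m$; around each point $u$ draw $m$ rays with consecutive angular separation $\theta$, oriented so the vertical upward ray from $u$ bisects a cone $C_0^u$; cones numbered $C_0^u,\dots,C_{m-1}^u$ clockwise, same orientation at every point. General position: no two points on a line parallel to a cone boundary ray, no two on a line perpendicular to a cone bisector, no three collinear. The $\theta_m$-graph on $P$: for each $u\in P$ and each cone $C_i^u$ containing another point of $P$, add an edge from $u$ to the point of $C_i^u$ whose orthogonal projection onto the bisector of $C_i^u$ is closest to $u$; edges weighted by Euclidean length. Canonical triangle: if $w$ lies in cone $C$ of $u$, $T_{uw}$ is the triangle bounded by the two boundary rays of $C$ and the line through $w$ perpendicular to the bisector of $C$. *)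

(* Defs.v *)
From Stdlib Require Import Reals Lra List.
Open Scope R_scope.

Definition pt := (R * R)%type.

Definition sub (p q : pt) : pt := (fst p - fst q, snd p - snd q).
Definition dot (p q : pt) : R := fst p * fst q + snd p * snd q.
Definition cross (p q : pt) : R := fst p * snd q - snd p * fst q.
Definition edist (p q : pt) : R := sqrt (dot (sub p q) (sub p q)).

Definition theta (m : nat) : R := 2 * PI / INR m.

(* Direction of the bisector of cone C_i: C_0 is bisected by the upward
   vertical ray, cones numbered clockwise, so the bisector of C_i has
   (counterclockwise, from the positive x-axis) angle pi/2 - i*theta. *)
Definition bis_angle (m i : nat) : R := PI / 2 - INR i * theta m.
Definition bis (m i : nat) : pt := (cos (bis_angle m i), sin (bis_angle m i)).

Definition ray_dir (m j : nat) : pt :=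
  (cos (PI / 2 + theta m / 2 - INR j * theta m),
   sin (PI / 2 + theta m / 2 - INR j * theta m)).

Definition proj (m i : nat) (u v : pt) : R := dot (sub v u) (bis m i).

(* v lies in cone C_i^u (closed cone of half-angle theta/2 around the
   bisector; boundary points are excluded anyway by general position). *)
Definition in_cone (m i : nat) (u v : pt) : Prop :=
  (i < m)%nat /\ v <> u /\ proj m i u v >= edist u v * cos (theta m / 2).

Definition general_position (m : nat) (P : list pt) : Prop :=
  (forall p q, In p P -> In q P -> p <> q ->
     forall j, (j < m)%nat -> cross (sub q p) (ray_dir m j) <> 0) /\
  (forall p q, In p P -> In q P -> p <> q ->
     forall i, (i < m)%nat -> dot (sub q p) (bis m i) <> 0) /\
  (forall p q r, In p P -> In q P -> In r P -> p <> q -> q <> r -> p <> r ->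
     cross (sub q p) (sub r p) <> 0).

Definition theta_arc (m : nat) (P : list pt) (u w : pt) : Prop :=
  exists i, In w P /\ in_cone m i u w /\
    forall v, In v P -> in_cone m i u v -> proj m i u w <= proj m i u v.

Definition theta_edge (m : nat) (P : list pt) (u w : pt) : Prop :=
  In u P /\ (theta_arc m P u w \/ theta_arc m P w u).

Fixpoint walk (E : pt -> pt -> Prop) (x : pt) (l : list pt) : Prop :=
  match l with
  | nil => True
  | y :: l' => E x y /\ walk E y l'
  end.

Fixpoint path_length (x : pt) (l : list pt) : R :=
  match l with
  | nil => 0
  | y :: l' => edist x y + path_length y l'
  end.

Definition theta_path (m : nat) (P : list pt) (u w : pt) (l : list pt) : Prop :=
  walk (theta_edge m P) u l /\ NoDup (u :: l) /\ last l u = w.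

(* Unsigned angle between uw and uM, where M = u + proj * bis is the midpoint
   of the side of T_uw opposite u (w in cone i of u). *)
Definition alpha_angle (m i : nat) (u w : pt) : R :=
  acos (proj m i u w / edist u w).

Definition stretch_bound (m : nat) (a : R) : R :=
  cos a / cos (theta m / 2) +
  (cos a * tan (theta m / 2) + sin a) / (cos (theta m / 2) - sin (theta m / 2)).

(* Main.v *)
Require Import Defs.
From Stdlib Require Import Reals Lra Lia Psatz List Arith Classical ClassicalDescription.
Open Scope R_scope.

Lemma sc1 x : sin x * sin x + cos x * cos x = 1.
Proof. pose proof (sin2_cos2 x). unfold Rsqr in H. lra. Qed.

Lemma INR_m k : INR (4*k+4) = 4 * (INR k + 1).
Proof. rewrite plus_INR, mult_INR. simpl. lra. Qed.

Lemma theta_eq k : theta (4*k+4) = PI / (2 * (INR k + 1)).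
Proof. unfold theta. rewrite INR_m. field. pose proof (pos_INR k). lra. Qed.

Lemma phi_bounds k : (1 <= k)%nat -> 0 < theta (4*k+4) / 2 <= PI / 8.
Proof.
  intro Hk. rewrite theta_eq. apply le_INR in Hk. simpl in Hk.
  pose proof PI_RGT_0. split.
  - apply Rmult_lt_0_compat; [|lra]. apply Rdiv_lt_0_compat; lra.
  - unfold Rdiv. rewrite Rmult_assoc. rewrite <- Rinv_mult.
    apply Rmult_le_compat_l; [lra|]. apply Rinv_le_contravar; lra.
Qed.

Lemma cs_facts k : (1 <= k)%nat ->
  0 < sin (theta (4*k+4) / 2) /\ 0 < cos (theta (4*k+4) / 2) /\
  sin (theta (4*k+4) / 2) < cos (theta (4*k+4) / 2) /\
  sin (theta (4*k+4) / 2) * sin (theta (4*k+4) / 2) <= /2.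
Proof.
  intros Hk. destruct (phi_bounds k Hk) as [H1 H2].
  set (f := theta (4*k+4) / 2) in *.
  pose proof PI_RGT_0. pose proof (sc1 f).
  assert (Hs : 0 < sin f) by (apply sin_gt_0; lra).
  assert (Hc : 0 < cos f) by (apply cos_gt_0; lra).
  assert (Hsc : sin f < cos f).
  { rewrite <- sin_shift. apply sin_increasing_1; lra. }
  repeat split; try lra. nra.
Qed.
Lemma sin_shift_q x q : Rabs (sin (x + INR q * PI)) = Rabs (sin x).
Proof.
  induction q.
  - simpl. rewrite Rmult_0_l, Rplus_0_r. reflexivity.
  - rewrite S_INR. replace (x + (INR q + 1) * PI) with ((x + INR q * PI) + PI) by ring.
    rewrite neg_sin, Rabs_Ropp. exact IHq.
Qed.

Lemma sin_ge_lowK (K x : R) : 2 <= K -> PI / K <= x <= PI - PI / K ->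
  sin (PI / K) <= sin x.
Proof.
  intros HK [H1 H2]. pose proof PI_RGT_0.
  assert (HPK : PI / K <= PI / 2).
  { unfold Rdiv. apply Rmult_le_compat_l; [lra|]. apply Rinv_le_contravar; lra. }
  assert (HPK0 : 0 < PI / K) by (apply Rdiv_lt_0_compat; lra).
  destruct (Rle_dec x (PI/2)).
  - apply sin_incr_1; lra.
  - rewrite <- (sin_PI_x x). apply sin_incr_1; lra.
Qed.

Lemma sin_fact (k n : nat) : (1 <= k)%nat ->
  sin (INR n * PI / (INR k + 1)) = 0 \/
  sin (PI / (INR k + 1)) <= Rabs (sin (INR n * PI / (INR k + 1))).
Proof.
  intro Hk. set (K := INR k + 1).
  assert (HK : 2 <= K) by (apply le_INR in Hk; simpl in Hk; unfold K; lra).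
  pose proof (Nat.div_mod_eq n (S k)) as Hd.
  pose proof (Nat.mod_upper_bound n (S k) ltac:(lia)) as Hr.
  set (q := (n / S k)%nat) in *. set (r := (n mod S k)%nat) in *.
  assert (Hx : INR n * PI / K = INR r * PI / K + INR q * PI).
  { rewrite Hd, plus_INR, mult_INR, S_INR. unfold K. pose proof (pos_INR k). field. lra. }
  rewrite Hx. pose proof (sin_shift_q (INR r * PI / K) q) as Hq.
  destruct r as [|r'] eqn:Er.
  - left. simpl in Hq |- *. rewrite Rmult_0_l, Rdiv_0_l, sin_0, Rabs_R0 in Hq.
    rewrite Rmult_0_l, Rdiv_0_l in *.
    destruct (Req_dec (sin (0 + INR q * PI)) 0) as [E|E]; [exact E|].
    apply Rabs_no_R0 in E. contradiction.
  - right. rewrite Hq. pose proof PI_RGT_0.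
    assert (H1 : 1 <= INR (S r')) by (apply (le_INR 1); lia).
    assert (H2 : INR (S r') <= K - 1).
    { unfold K. replace (INR k + 1 - 1) with (INR k) by ring. apply le_INR. lia. }
    assert (Hb : PI / K <= INR (S r') * PI / K <= PI - PI / K).
    { split; unfold Rdiv.
      - rewrite <- (Rmult_1_l (PI * / K)) at 1. rewrite Rmult_assoc.
        apply Rmult_le_compat_r; [|lra]. apply Rmult_le_pos; [lra|]. left; apply Rinv_0_lt_compat; lra.
      - replace (PI - PI * / K) with ((K - 1) * (PI * / K)) by (field; lra).
        rewrite Rmult_assoc. apply Rmult_le_compat_r; [|lra].
        apply Rmult_le_pos; [lra|]. left; apply Rinv_0_lt_compat; lra. }
    pose proof (sin_ge_lowK K _ HK Hb).
    assert (0 <= sin (PI / K)).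
    { apply sin_ge_0. apply Rlt_le, Rdiv_lt_0_compat; lra.
      unfold Rdiv. rewrite <- (Rmult_1_r PI) at 2. apply Rmult_le_compat_l; [lra|].
      rewrite <- Rinv_1. apply Rinv_le_contravar; lra. }
    rewrite Rabs_right; lra.
Qed.
Lemma abs_sq_le a b : 0 <= b -> a * a <= b * b -> Rabs a <= b.
Proof. intros Hb H. apply Rsqr_incr_0; [|apply Rabs_pos|exact Hb].
  rewrite <- Rsqr_abs. unfold Rsqr. exact H. Qed.

Lemma C5 (G G' S C Q σ τ : R) : S*S + C*C = 1 -> G*G + G'*G' = Q*Q -> 0 <= Q ->
  σ*σ + τ*τ = 1 -> 0 <= σ -> 0 <= τ -> 0 <= τ*τ - σ*σ -> Rabs G <= Q*σ ->
  (S = 0 \/ 2*σ*τ <= Rabs S) -> Rabs G <= Rabs (G*C + G'*S).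
Proof.
  intros HSC HG HQ Hst Hs Ht Hd HGb [HS|HS].
  - subst S. assert (Rabs C = 1).
    { assert (C*C = 1) by lra. unfold Rabs; destruct (Rcase_abs C); nra. }
    rewrite Rmult_0_r, Rplus_0_r, Rabs_mult, H. lra.
  - assert (HC : Rabs C <= τ*τ - σ*σ).
    { apply abs_sq_le; [exact Hd|].
      assert (2*σ*τ * (2*σ*τ) <= S*S).
      { assert (Rabs S * Rabs S = S * S) by (rewrite <- Rabs_mult; apply Rabs_right; nra).
        assert (0 <= 2*σ*τ) by (apply Rmult_le_pos; lra).
        rewrite <- H. apply Rmult_le_compat; lra. }
      nra. }
    assert (HG' : Q*τ <= Rabs G').
    { assert (Rabs G * Rabs G <= Q*σ*(Q*σ)) by (apply Rmult_le_compat; try apply Rabs_pos; lra).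
      rewrite <- Rabs_mult, Rabs_right in H by nra.
      apply Rsqr_incr_0; [|nra|apply Rabs_pos]. unfold Rsqr.
      rewrite <- Rabs_mult, Rabs_right by nra. nra. }
    assert (Ht1 : Rabs G' * Rabs S - Rabs G * Rabs C <= Rabs (G*C + G'*S)).
    { pose proof (Rabs_triang_inv (G'*S) (G*C)). rewrite !Rabs_mult in H.
      rewrite Rplus_comm. replace (G' * S) with (G'*S + G*C - G*C) in H at 1 by ring.
      pose proof (Rabs_triang (G'*S + G*C) (- (G*C))).
      rewrite Rabs_Ropp, Rabs_mult in H0.
      replace (G'*S + G*C + - (G*C)) with (G'*S) in H0 by ring. rewrite Rabs_mult in H0. lra. }
    assert (Rabs G' * Rabs S >= Q*τ*(2*σ*τ)).
    { apply Rle_ge, Rmult_le_compat; try lra; nra. }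
    assert (Rabs G * Rabs C <= Rabs G * (τ*τ - σ*σ)) by (apply Rmult_le_compat_l; [apply Rabs_pos|lra]).
    assert (Q*τ*(2*σ*τ) >= Rabs G * (2*τ*τ)) by nra.
    assert (E: Rabs G * (2*τ*τ) - Rabs G * (τ*τ - σ*σ) = Rabs G * (σ*σ+τ*τ)) by ring.
    rewrite Hst, Rmult_1_r in E. lra.
Qed.

Lemma HXA p q A : (p * cos A + q * sin A) * (q * cos A - p * sin A) =
  p*q*cos(2*A) + (q*q - p*p)/2 * sin(2*A).
Proof. rewrite cos_2a, sin_2a. field. Qed.

Lemma HX2 p q A : (p * cos A + q * sin A) * (p * cos A + q * sin A) +
  (q * cos A - p * sin A) * (q * cos A - p * sin A) = p*p + q*q.
Proof.
  replace ((p * cos A + q * sin A) * (p * cos A + q * sin A) +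
  (q * cos A - p * sin A) * (q * cos A - p * sin A)) with ((p*p+q*q)*(sin A * sin A + cos A * cos A)) by ring.
  rewrite sc1. ring.
Qed.

Lemma core (p q Ai Aj c s : R) :
  c*c + s*s = 1 -> 0 <= s -> 0 <= c -> s*s <= /2 ->
  0 <= (c*c-s*s)*(c*c-s*s) - (2*s*c)*(2*s*c) ->
  p * cos Aj + q * sin Aj >= sqrt (p*p+q*q) * c -> 0 <= p * cos Ai + q * sin Ai ->
  (sin (2*Ai - 2*Aj) = 0 \/ 2*(2*s*c)*(c*c - s*s) <= Rabs (sin (2*Ai - 2*Aj))) ->
  (p * cos Aj + q * sin Aj) + Rabs (q * cos Aj - p * sin Aj) <=
  (p * cos Ai + q * sin Ai) + Rabs (q * cos Ai - p * sin Ai).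
Proof.
  intros Hcs Hs Hc Hs2 Hd HHj HHi Htr.
  set (R2 := p*p+q*q). set (Hj := p * cos Aj + q * sin Aj). set (Xj := q * cos Aj - p * sin Aj).
  set (Hi := p * cos Ai + q * sin Ai). set (Xi := q * cos Ai - p * sin Ai).
  fold R2 in HHj. fold Hj in HHj. fold Hi in HHi.
  assert (EHXj : Hj*Hj + Xj*Xj = R2) by apply HX2.
  assert (EHXi : Hi*Hi + Xi*Xi = R2) by apply HX2.
  assert (HR2 : 0 <= R2) by (unfold R2; nra).
  assert (Hsq : sqrt R2 * sqrt R2 = R2) by (apply sqrt_sqrt; exact HR2).
  assert (Hsq0 : 0 <= sqrt R2) by apply sqrt_pos.
  assert (Hj0 : 0 <= Hj) by (assert (0 <= sqrt R2 * c) by (apply Rmult_le_pos; lra); lra).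
  assert (Hjsq : R2 * (c*c) <= Hj * Hj).
  { assert (sqrt R2 * c * (sqrt R2 * c) <= Hj * Hj) by (apply Rmult_le_compat; try apply Rmult_le_pos; lra).
    assert (E : sqrt R2 * c * (sqrt R2 * c) = R2 * (c*c)).
    { replace (sqrt R2 * c * (sqrt R2 * c)) with (sqrt R2 * sqrt R2 * (c*c)) by ring. rewrite Hsq. ring. }
    lra. }
  assert (HXjsq : Xj*Xj <= R2 * (s*s)) by nra.
  set (G := p*q*cos(2*Aj) + (q*q - p*p)/2 * sin(2*Aj)).
  set (G' := - (p*q*sin(2*Aj)) + (q*q - p*p)/2 * cos(2*Aj)).
  set (e := 2*Ai - 2*Aj).
  assert (EG : Hj * Xj = G) by apply HXA.
  assert (EGi : Hi * Xi = G * cos e + G' * sin e).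
  { unfold Hi, Xi. rewrite HXA. replace (2*Ai) with (2*Aj + e) by (unfold e; ring).
    rewrite cos_plus, sin_plus. unfold G, G'. ring. }
  assert (EGG : G*G + G'*G' = (R2/2)*(R2/2)).
  { replace (G*G + G'*G') with ((p*q*(p*q) + (q*q-p*p)/2*((q*q-p*p)/2)) *
       (sin (2*Aj) * sin (2*Aj) + cos (2*Aj) * cos (2*Aj))) by (unfold G, G'; ring).
    rewrite sc1. unfold R2. field. }
  assert (HGb : Rabs G <= R2/2 * (2*s*c)).
  { rewrite <- EG. apply abs_sq_le; [apply Rmult_le_pos; [lra|]; apply Rmult_le_pos; [apply Rmult_le_pos|]; lra|].
    replace (Hj*Xj*(Hj*Xj)) with ((R2 - Xj*Xj) * (Xj*Xj)) by (rewrite <- EHXj; ring).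
    assert (0 <= (R2*(s*s) - Xj*Xj) * (R2*(c*c) - Xj*Xj)).
    { apply Rmult_le_pos; [lra|]. nra. }
    replace (R2 / 2 * (2 * s * c) * (R2 / 2 * (2 * s * c))) with (R2*R2*(s*s)*(c*c)) by field.
    replace (c*c) with (1 - s*s) in * by lra. nra. }
  assert (Habs : Rabs G <= Rabs (G * cos e + G' * sin e)).
  { assert (A1 : sin e * sin e + cos e * cos e = 1) by apply sc1.
    assert (A2 : 0 <= R2/2) by lra.
    assert (A3 : (2*s*c)*(2*s*c) + (c*c-s*s)*(c*c-s*s) = 1).
    { replace ((2*s*c)*(2*s*c) + (c*c-s*s)*(c*c-s*s)) with ((c*c+s*s)*(c*c+s*s)) by ring.
      rewrite Hcs. ring. }
    assert (A4 : 0 <= 2*s*c) by (apply Rmult_le_pos; [apply Rmult_le_pos|]; lra).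
    assert (A5 : 0 <= c*c - s*s) by nra.
    assert (A6 : sin e = 0 \/ 2*(2*s*c)*(c*c-s*s) <= Rabs (sin e)) by exact Htr.
    exact (C5 G G' (sin e) (cos e) (R2/2) (2*s*c) (c*c - s*s) A1 EGG A2 A3 A4 A5 Hd HGb A6). }
  rewrite <- EGi, <- EG in Habs. rewrite !Rabs_mult in Habs.
  rewrite (Rabs_right Hj) in Habs by lra. rewrite (Rabs_right Hi) in Habs by lra.
  apply Rsqr_incr_0; unfold Rsqr.
  - assert (Rabs Xj * Rabs Xj = Xj * Xj) by (rewrite <- Rabs_mult; apply Rabs_right; nra).
    assert (Rabs Xi * Rabs Xi = Xi * Xi) by (rewrite <- Rabs_mult; apply Rabs_right; nra).
    nra.
  - pose proof (Rabs_pos Xj). lra.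
  - pose proof (Rabs_pos Xi). lra.
Qed.
Definition Xo (m i : nat) (u v : pt) : R := cross (bis m i) (sub v u).
Definition cs_m (m : nat) : R := cos (theta m / 2) - sin (theta m / 2).
Definition Dv (m i : nat) (u v : pt) : R := (proj m i u v + Rabs (Xo m i u v)) / cs_m m.

Lemma proj_Xo_sq m i u v : proj m i u v * proj m i u v + Xo m i u v * Xo m i u v =
  edist u v * edist u v.
Proof.
  unfold proj, Xo, edist, bis, dot, cross, sub; simpl.
  set (x := fst u - fst v). set (y := snd u - snd v).
  assert (0 <= x*x + y*y) by (pose proof (Rle_0_sqr x); pose proof (Rle_0_sqr y); unfold Rsqr in *; lra).
  rewrite sqrt_sqrt by exact H.
  pose proof (HX2 (fst v - fst u) (snd v - snd u) (bis_angle m i)).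
  replace (fst v - fst u) with (-x) in * by (unfold x; ring).
  replace (snd v - snd u) with (-y) in * by (unfold y; ring).
  replace (x*x+y*y) with (-x*-x + -y*-y) by ring. rewrite <- H0. ring.
Qed.

Lemma edist_pos u v : 0 <= edist u v.
Proof. apply sqrt_pos. Qed.

Lemma cone_Xo_bound k m i u v : (1 <= k)%nat -> m = (4*k+4)%nat -> in_cone m i u v ->
  Rabs (Xo m i u v) <= edist u v * sin (theta m / 2) /\
  edist u v * cos (theta m / 2) <= proj m i u v.
Proof.
  intros Hk Hm [_ [_ Hc]]. subst m. destruct (cs_facts k Hk) as [Hs [Hc0 [Hsc Hs2]]].
  pose proof (sc1 (theta (4*k+4)/2)).
  pose proof (proj_Xo_sq (4*k+4) i u v). pose proof (edist_pos u v).
  split; [|lra].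
  apply abs_sq_le; [apply Rmult_le_pos; lra|].
  assert (edist u v * cos (theta (4 * k + 4) / 2) * (edist u v * cos (theta (4 * k + 4) / 2))
     <= proj (4 * k + 4) i u v * proj (4 * k + 4) i u v).
  { apply Rmult_le_compat; try apply Rmult_le_pos; lra. }
  nra.
Qed.

Lemma trig_hyp k i j : (1 <= k)%nat ->
  let Ai := bis_angle (4*k+4) i in let Aj := bis_angle (4*k+4) j in
  let c := cos (theta (4*k+4)/2) in let s := sin (theta (4*k+4)/2) in
  (sin (2*Ai - 2*Aj) = 0 \/ 2*(2*s*c)*(c*c - s*s) <= Rabs (sin (2*Ai - 2*Aj))) /\
  0 <= (c*c-s*s)*(c*c-s*s) - (2*s*c)*(2*s*c).
Proof.
  intros Hk Ai Aj c s.
  assert (E4 : PI / (INR k + 1) = 2 * (2 * (theta (4*k+4)/2))).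
  { rewrite theta_eq. field. pose proof (pos_INR k). lra. }
  assert (Esin : sin (PI / (INR k + 1)) = 2*(2*s*c)*(c*c - s*s)).
  { rewrite E4, sin_2a, sin_2a, cos_2a. unfold s, c. ring. }
  split.
  - rewrite <- Esin.
    assert (E : 2*Ai - 2*Aj = (INR j - INR i) * PI / (INR k + 1)).
    { unfold Ai, Aj, bis_angle. rewrite theta_eq. field. pose proof (pos_INR k). lra. }
    rewrite E. destruct (le_lt_dec i j) as [Hij|Hij].
    + rewrite <- minus_INR by exact Hij. apply sin_fact; exact Hk.
    + replace ((INR j - INR i) * PI / (INR k + 1)) with (- (INR (i - j) * PI / (INR k + 1))).
      2:{ rewrite minus_INR by lia. field. pose proof (pos_INR k). lra. }
      rewrite sin_neg, Rabs_Ropp.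
      destruct (sin_fact k (i-j) Hk) as [H|H]; [left; rewrite H; ring|right; exact H].
  - assert (Ecos : cos (PI / (INR k + 1)) = (c*c-s*s)*(c*c-s*s) - (2*s*c)*(2*s*c)).
    { rewrite E4, cos_2a, sin_2a, cos_2a. unfold s, c. ring. }
    rewrite <- Ecos. apply cos_ge_0; pose proof PI_RGT_0;
    assert (2 <= INR k + 1) by (apply le_INR in Hk; simpl in Hk; lra).
    + assert (0 < PI / (INR k + 1)) by (apply Rdiv_lt_0_compat; lra). lra.
    + unfold Rdiv. apply Rmult_le_compat_l; [lra|]. apply Rinv_le_contravar; lra.
Qed.

Lemma key_step k i j u a w : (1 <= k)%nat ->
  in_cone (4*k+4) i u a -> in_cone (4*k+4) j a w ->
  proj (4*k+4) i u a <= proj (4*k+4) i u w ->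
  edist u a + Dv (4*k+4) j a w <= Dv (4*k+4) i u w.
Proof.
  intros Hk Ha Hw Hle.
  destruct (cs_facts k Hk) as [Hs [Hc0 [Hsc Hs2]]].
  pose proof (sc1 (theta (4*k+4)/2)) as Hcs.
  destruct (trig_hyp k i j Hk) as [Htr Hd].
  assert (Hcore := core (fst w - fst a) (snd w - snd a) (bis_angle (4*k+4) i) (bis_angle (4*k+4) j)
     (cos (theta (4*k+4)/2)) (sin (theta (4*k+4)/2))).
  destruct Hw as [Hjm [Hwa Hwc]].
  assert (Hwc' : (fst w - fst a) * cos (bis_angle (4*k+4) j) + (snd w - snd a) * sin (bis_angle (4*k+4) j) >=
     sqrt ((fst w - fst a) * (fst w - fst a) + (snd w - snd a) * (snd w - snd a)) * cos (theta (4*k+4)/2)).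
  { replace (sqrt ((fst w - fst a) * (fst w - fst a) + (snd w - snd a) * (snd w - snd a)))
      with (edist a w) by (unfold edist, dot, sub; simpl; f_equal; ring). exact Hwc. }
  assert (Hi0 : 0 <= (fst w - fst a) * cos (bis_angle (4*k+4) i) + (snd w - snd a) * sin (bis_angle (4*k+4) i)).
  { replace ((fst w - fst a) * cos (bis_angle (4*k+4) i) + (snd w - snd a) * sin (bis_angle (4*k+4) i))
      with (proj (4*k+4) i u w - proj (4*k+4) i u a) by (unfold proj, dot, sub, bis; simpl; ring). lra. }
  specialize (Hcore ltac:(lra) ltac:(lra) ltac:(lra) ltac:(lra) Hd Hwc' Hi0 Htr).
  destruct (cone_Xo_bound k (4*k+4) i u a Hk eq_refl Ha) as [HX HP].
  assert (E1 : proj (4*k+4) j a w + Rabs (Xo (4*k+4) j a w) =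
     (fst w - fst a) * cos (bis_angle (4*k+4) j) + (snd w - snd a) * sin (bis_angle (4*k+4) j) +
     Rabs ((snd w - snd a) * cos (bis_angle (4*k+4) j) - (fst w - fst a) * sin (bis_angle (4*k+4) j))).
  { unfold proj, Xo, dot, cross, sub, bis; simpl. f_equal. f_equal. ring. }
  assert (E2 : (snd w - snd a) * cos (bis_angle (4*k+4) i) - (fst w - fst a) * sin (bis_angle (4*k+4) i)
     = Xo (4*k+4) i u w - Xo (4*k+4) i u a).
  { unfold Xo, cross, sub, bis; simpl. ring. }
  assert (E3 : (fst w - fst a) * cos (bis_angle (4*k+4) i) + (snd w - snd a) * sin (bis_angle (4*k+4) i)
     = proj (4*k+4) i u w - proj (4*k+4) i u a).
  { unfold proj, dot, sub, bis; simpl. ring. }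
  rewrite E2, E3, <- E1 in Hcore.
  pose proof (Rabs_triang (Xo (4*k+4) i u w) (- Xo (4*k+4) i u a)). rewrite Rabs_Ropp in H.
  assert (Hfin : proj (4*k+4) j a w + Rabs (Xo (4*k+4) j a w) + edist u a * cs_m (4*k+4) <=
    proj (4*k+4) i u w + Rabs (Xo (4*k+4) i u w)).
  { unfold cs_m. unfold Rminus in Hcore. lra. }
  unfold Dv. assert (Hcs0 : 0 < cs_m (4*k+4)) by (unfold cs_m; lra).
  replace (edist u a + (proj (4*k+4) j a w + Rabs (Xo (4*k+4) j a w)) / cs_m (4*k+4)) with
    ((proj (4*k+4) j a w + Rabs (Xo (4*k+4) j a w) + edist u a * cs_m (4*k+4)) / cs_m (4*k+4)) by (field; lra).
  unfold Rdiv. apply Rmult_le_compat_r; [left; apply Rinv_0_lt_compat; lra|exact Hfin].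
Qed.

Lemma floor_ex (th : R) (N : nat) (t : R) : 0 < th -> 0 <= t -> t < INR N * th ->
  exists n, (n < N)%nat /\ INR n * th <= t < (INR n + 1) * th.
Proof.
  intros Hth Ht. induction N as [|N IH]; intros HN.
  - simpl in HN. lra.
  - destruct (Rlt_dec t (INR N * th)) as [Hl|Hl].
    + destruct (IH Hl) as [n [Hn1 Hn2]]. exists n. split; [lia|exact Hn2].
    + exists N. split; [lia|]. rewrite S_INR in HN. lra.
Qed.

Lemma cos_ge_phi (phi d : R) : 0 <= phi <= PI -> -phi <= d <= phi -> cos phi <= cos d.
Proof.
  intros Hp Hd. destruct (Rle_dec 0 d).
  - apply cos_decr_1; lra.
  - rewrite <- (cos_neg d). apply cos_decr_1; lra.
Qed.

Lemma polar (p q : R) : p*p + q*q = 1 -> exists psi, -PI <= psi <= PI /\ cos psi = p /\ sin psi = q.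
Proof.
  intro H. assert (Hp : -1 <= p <= 1) by nra.
  assert (Hq : sqrt (1 - p*p) = Rabs q).
  { replace (1 - p*p) with (Rsqr q) by (unfold Rsqr; lra). apply sqrt_Rsqr_abs. }
  pose proof (acos_bound p).
  destruct (Rle_dec 0 q).
  - exists (acos p). split; [pose proof PI_RGT_0; lra|]. split; [apply cos_acos; exact Hp|].
    rewrite sin_acos by exact Hp. unfold Rsqr. rewrite Hq. apply Rabs_right. lra.
  - exists (- acos p). split; [lra|]. rewrite cos_neg, sin_neg. split; [apply cos_acos; exact Hp|].
    rewrite sin_acos by exact Hp. unfold Rsqr. rewrite Hq. rewrite Rabs_left by lra. ring.
Qed.

Lemma cone_exists k u v : (1 <= k)%nat -> v <> u -> exists j, in_cone (4*k+4) j u v.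
Proof.
  intros Hk Hvu. destruct (phi_bounds k Hk) as [Hph1 Hph2].
  set (m := (4*k+4)%nat). set (p := fst v - fst u). set (q := snd v - snd u).
  set (r := sqrt (p*p+q*q)).
  assert (Hpq : 0 < p*p + q*q).
  { destruct (Req_dec p 0) as [Hp|Hp]; [destruct (Req_dec q 0) as [Hq|Hq]|].
    - exfalso. apply Hvu. destruct u, v. unfold p, q in *; simpl in *. f_equal; lra.
    - nra.
    - nra. }
  assert (Hr : 0 < r) by (apply sqrt_lt_R0; exact Hpq).
  assert (Hrr : r * r = p*p+q*q) by (apply sqrt_sqrt; lra).
  destruct (polar (p/r) (q/r)) as [psi [Hpsi [Hc Hs]]].
  { replace (p/r*(p/r) + q/r*(q/r)) with ((p*p+q*q)/(r*r)) by (field; lra). rewrite Hrr. field; lra. }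
  pose proof PI_RGT_0.
  set (phi := theta m / 2) in *. change (theta (4*k+4) / 2) with phi in Hph1, Hph2.
  assert (Hth : theta m = 2 * phi) by (unfold phi; field).
  assert (Hmth : INR m * theta m = 2 * PI).
  { unfold theta. field. unfold m. rewrite INR_m. pose proof (pos_INR k). lra. }
  set (tau := PI/2 + phi - psi + 2*PI).
  destruct (floor_ex (theta m) (m + m) tau) as [n [Hn1 Hn2]];
    [lra | unfold tau; lra | rewrite plus_INR; unfold tau; lra |].
  set (d := tau - INR n * theta m).
  assert (Hd : 0 <= d < 2*phi) by (unfold d; lra).
  assert (Hkey : forall j, INR j * theta m = INR n * theta m \/ INR j * theta m = INR n * theta m - 2*PI ->
     (j < m)%nat -> in_cone m j u v).
  { intros j Hj Hjm. split; [exact Hjm|]. split; [exact Hvu|].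
    assert (Edist : edist u v = r).
    { unfold edist, r, dot, sub, p, q; simpl. f_equal. ring. }
    assert (Eproj : proj m j u v = r * cos (psi - bis_angle m j)).
    { unfold proj, dot, sub, bis. simpl. rewrite cos_minus, Hc, Hs. fold p q. field. lra. }
    rewrite Edist, Eproj. apply Rle_ge, Rmult_le_compat_l; [lra|].
    assert (Ea : psi - bis_angle m j = phi - d \/ psi - bis_angle m j = phi - d + 2*PI).
    { unfold bis_angle, d, tau. destruct Hj as [Hj|Hj]; rewrite Hj; [right|left]; ring. }
    destruct Ea as [Ea|Ea]; rewrite Ea.
    - apply cos_ge_phi; lra.
    - rewrite cos_plus, cos_2PI, sin_2PI. rewrite Rmult_1_r, Rmult_0_r, Rminus_0_r.
      apply cos_ge_phi; lra. }
  destruct (Nat.lt_ge_cases n m) as [Hnm|Hnm].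
  - exists n. apply Hkey; [left; reflexivity|exact Hnm].
  - exists (n - m)%nat. apply Hkey; [|lia]. right. rewrite minus_INR by exact Hnm.
    rewrite Rmult_minus_distr_r, Hmth. ring.
Qed.

Lemma edist_pos_neq u v : v <> u -> 0 < edist u v.
Proof.
  intro Hvu. unfold edist, dot, sub. apply sqrt_lt_R0. simpl.
  set (p := fst u - fst v). set (q := snd u - snd v).
  destruct (Req_dec p 0) as [Hp|Hp]; [destruct (Req_dec q 0) as [Hq|Hq]|].
  - exfalso. apply Hvu. destruct u, v. unfold p, q in *; simpl in *. f_equal; lra.
  - nra.
  - nra.
Qed.

Lemma edist_le_Dv k i u w : (1 <= k)%nat -> in_cone (4*k+4) i u w ->
  edist u w <= Dv (4*k+4) i u w.
Proof.
  intros Hk Hc. destruct (cs_facts k Hk) as [Hs [Hc0 [Hsc Hs2]]].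
  destruct (cone_Xo_bound k _ i u w Hk eq_refl Hc) as [HX HP].
  pose proof (edist_pos u w). pose proof (Rabs_pos (Xo (4*k+4) i u w)).
  unfold Dv, cs_m. apply (Rmult_le_reg_r (cos (theta (4 * k + 4) / 2) - sin (theta (4 * k + 4) / 2))); [lra|].
  unfold Rdiv. rewrite Rmult_assoc, Rinv_l by lra. rewrite Rmult_1_r.
  nra.
Qed.

Lemma min_in (L : list pt) (Q : pt -> Prop) (f : pt -> R) :
  (exists x, In x L /\ Q x) -> exists a, In a L /\ Q a /\ forall v, In v L -> Q v -> f a <= f v.
Proof.
  induction L as [|y L IH]; intros [x [Hx HQ]].
  - destruct Hx.
  - destruct (classic (exists x, In x L /\ Q x)) as [Hex|Hnex].
    + destruct (IH Hex) as [a [Ha [HQa Hmin]]].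
      destruct (classic (Q y /\ f y <= f a)) as [Hy|Hy].
      * exists y. split; [left; reflexivity|]. split; [tauto|].
        intros v [Hv|Hv] HQv; [subst; lra|]. specialize (Hmin v Hv HQv). lra.
      * exists a. split; [right; exact Ha|]. split; [exact HQa|].
        intros v [Hv|Hv] HQv; [|exact (Hmin v Hv HQv)]. subst v.
        destruct (Rle_dec (f y) (f a)); [exfalso; apply Hy; tauto|lra].
    + destruct Hx as [Hx|Hx]; [|exfalso; apply Hnex; exists x; tauto]. subst x.
      exists y. split; [left; reflexivity|]. split; [exact HQ|].
      intros v [Hv|Hv] HQv; [subst; lra|]. exfalso. apply Hnex. exists v. tauto.
Qed.

Lemma last_default (a : pt) l d d' : last (a :: l) d = last (a :: l) d'.
Proof. revert a. induction l as [|b l IH]; intro a; [reflexivity|]. change (last (b::l) d = last (b::l) d'). apply IH. Qed.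

Lemma last_cons' (a : pt) l d : last (a :: l) d = last l a.
Proof. destruct l as [|p l]; [reflexivity|]. change (last (p :: l) d = last (p :: l) a). apply last_default. Qed.

Lemma last_app' (l1 l2 : list pt) d : last (l1 ++ l2) d = last l2 (last l1 d).
Proof.
  revert d. induction l1 as [|a l1 IH]; intro d; [reflexivity|].
  simpl app. rewrite !last_cons'. apply IH.
Qed.

Lemma path_length_app x l1 l2 :
  path_length x (l1 ++ l2) = path_length x l1 + path_length (last l1 x) l2.
Proof.
  revert x. induction l1 as [|a l1 IH]; intro x; [simpl; ring|].
  change (path_length x ((a :: l1) ++ l2)) with (edist x a + path_length a (l1 ++ l2)).
  rewrite IH, last_cons'. change (path_length x (a :: l1)) with (edist x a + path_length a l1). ring.
Qed.

Lemma path_length_nonneg x l : 0 <= path_length x l.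
Proof.
  revert x. induction l as [|a l IH]; intro x; simpl; [lra|].
  pose proof (edist_pos x a). pose proof (IH a). lra.
Qed.

Lemma walk_app_r E x l1 l2 : walk E x (l1 ++ l2) -> walk E (last l1 x) l2.
Proof.
  revert x. induction l1 as [|a l1 IH]; intros x H; [exact H|].
  rewrite last_cons'. apply IH. destruct H as [_ H]. exact H.
Qed.

Lemma loop_erase E u l : walk E u l ->
  exists l', walk E u l' /\ NoDup (u :: l') /\ last l' u = last l u /\
    path_length u l' <= path_length u l.
Proof.
  revert u. induction l as [|y l IH]; intros u Hw.
  - exists nil. split; [exact I|]. split; [constructor; [intro H; destruct H|constructor]|].
    split; reflexivity || lra.
  - destruct Hw as [Huy Hw]. destruct (IH y Hw) as [l'' [Hw'' [Hnd [Hl Hlen]]]].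
    rewrite last_cons'. simpl path_length. pose proof (edist_pos u y).
    destruct (classic (In u (y :: l''))) as [Hin|Hnin].
    + destruct Hin as [Heq|Hin].
      * subst y. exists l''. split; [exact Hw''|]. split; [exact Hnd|]. split; [exact Hl|]. lra.
      * destruct (in_split u l'' Hin) as [l1 [l2 Hsplit]]. subst l''.
        exists l2. split.
        { apply walk_app_r in Hw''. destruct Hw'' as [_ Hw'']. exact Hw''. }
        split.
        { apply NoDup_cons_iff in Hnd. destruct Hnd as [_ Hnd]. apply NoDup_app_remove_l in Hnd. exact Hnd. }
        split.
        { rewrite <- Hl. rewrite last_app'. rewrite last_cons'. reflexivity. }
        rewrite path_length_app in Hlen. simpl in Hlen.
        pose proof (path_length_nonneg y l1). pose proof (edist_pos (last l1 y) u). lra.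
    + exists (y :: l''). split; [split; assumption|]. split; [constructor; assumption|].
      split; [rewrite last_cons'; exact Hl|]. simpl. lra.
Qed.

Definition trip (m : nat) (P : list pt) : list ((pt * pt) * nat) :=
  list_prod (list_prod P P) (seq 0 m).

Definition tpred (m : nat) (B : R) (t : (pt * pt) * nat) : bool :=
  if ClassicalDescription.excluded_middle_informative
       (in_cone m (snd t) (fst (fst t)) (snd (fst t)) /\
        Dv m (snd t) (fst (fst t)) (snd (fst t)) < B) then true else false.

Definition cnt (m : nat) (P : list pt) (B : R) : nat := length (filter (tpred m B) (trip m P)).

Lemma filter_lt {A} (L : list A) (f g : A -> bool) x :
  (forall y, f y = true -> g y = true) -> In x L -> g x = true -> f x = false ->
  (length (filter f L) < length (filter g L))%nat.
Proof.
  intros Hfg. induction L as [|y L IH]; intros Hx Hg Hf; [destruct Hx|].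
  assert (Hle : forall L', (length (filter f L') <= length (filter g L'))%nat).
  { induction L' as [|z L' IH']; simpl; [lia|].
    destruct (f z) eqn:Ef; [rewrite (Hfg z Ef); simpl; lia|].
    destruct (g z); simpl; lia. }
  destruct Hx as [Hx|Hx].
  - subst y. simpl. rewrite Hf, Hg. simpl. specialize (Hle L). lia.
  - specialize (IH Hx Hg Hf). simpl. destruct (f y) eqn:Ef.
    + rewrite (Hfg y Ef). simpl. lia.
    + destruct (g y); simpl; lia.
Qed.

Lemma cnt_lt m P a w j B1 B2 : In a P -> In w P -> (j < m)%nat -> in_cone m j a w ->
  Dv m j a w = B1 -> B1 < B2 -> (cnt m P B1 < cnt m P B2)%nat.
Proof.
  intros Ha Hw Hj Hc HB1 H12. unfold cnt.
  apply (filter_lt _ _ _ ((a, w), j)).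
  - intros [[p q] i] Hy. unfold tpred in *. simpl in *.
    destruct (ClassicalDescription.excluded_middle_informative _) as [[H1 H2]|H]; [|discriminate].
    destruct (ClassicalDescription.excluded_middle_informative _) as [_|H']; [reflexivity|].
    exfalso. apply H'. split; [exact H1|lra].
  - unfold trip. apply in_prod; [apply in_prod; assumption|]. apply in_seq. lia.
  - unfold tpred. simpl. destruct (ClassicalDescription.excluded_middle_informative _) as [_|H'];
    [reflexivity|]. exfalso. apply H'. split; [exact Hc|lra].
  - unfold tpred. simpl. destruct (ClassicalDescription.excluded_middle_informative _) as [[_ H]|_];
    [lra|reflexivity].
Qed.

Lemma main_ind k P : (1 <= k)%nat -> forall n u w i, (cnt (4*k+4) P (Dv (4*k+4) i u w) < n)%nat ->
  In u P -> In w P -> in_cone (4*k+4) i u w ->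
  exists l, walk (theta_edge (4*k+4) P) u l /\ last l u = w /\
    path_length u l <= Dv (4*k+4) i u w.
Proof.
  intros Hk n. induction n as [|n IH]; intros u w i Hn Hu Hw Hc; [lia|].
  destruct (min_in P (fun v => in_cone (4*k+4) i u v) (proj (4*k+4) i u)) as [a [Ha [Hca Hmin]]].
  { exists w. split; assumption. }
  assert (Hedge : theta_edge (4*k+4) P u a).
  { split; [exact Hu|]. left. exists i. split; [exact Ha|]. split; [exact Hca|]. exact Hmin. }
  destruct (classic (a = w)) as [Haw|Haw].
  - subst a. exists (w :: nil). split; [split; [exact Hedge|exact I]|]. split; [reflexivity|].
    simpl path_length. pose proof (edist_le_Dv k i u w Hk Hc). lra.
  - destruct (cone_exists k a w Hk (fun H => Haw (eq_sym H))) as [j Hj].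
    pose proof (key_step k i j u a w Hk Hca Hj (Hmin w Hw Hc)) as Hks.
    assert (Hua : 0 < edist u a) by (apply edist_pos_neq; destruct Hca as [_ [H _]]; exact H).
    assert (Hlt : (cnt (4*k+4) P (Dv (4*k+4) j a w) < cnt (4*k+4) P (Dv (4*k+4) i u w))%nat).
    { apply (cnt_lt _ _ a w j); try assumption; [destruct Hj; assumption|reflexivity|lra]. }
    destruct (IH a w j ltac:(lia) Ha Hw Hj) as [l [Hwl [Hll Hlen]]].
    exists (a :: l). split; [split; assumption|]. split; [rewrite last_cons'; exact Hll|].
    simpl path_length. lra.
Qed.

Lemma bound_eq k i u w : (1 <= k)%nat -> in_cone (4*k+4) i u w ->
  stretch_bound (4*k+4) (alpha_angle (4*k+4) i u w) * edist u w = Dv (4*k+4) i u w.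
Proof.
  intros Hk Hc. destruct (cs_facts k Hk) as [Hs [Hc0 [Hsc Hs2]]].
  destruct (cone_Xo_bound k _ i u w Hk eq_refl Hc) as [HX HP].
  assert (Hd : 0 < edist u w) by (apply edist_pos_neq; destruct Hc as [_ [H _]]; exact H).
  pose proof (proj_Xo_sq (4*k+4) i u w) as Hsq.
  set (d := edist u w) in *. set (H := proj (4*k+4) i u w) in *. set (X := Xo (4*k+4) i u w) in *.
  set (c := cos (theta (4*k+4)/2)) in *. set (s := sin (theta (4*k+4)/2)) in *.
  assert (Hy : -1 <= H / d <= 1).
  { assert (H <= d) by nra. split.
    - apply (Rmult_le_reg_r d); [lra|]. unfold Rdiv. rewrite Rmult_assoc, Rinv_l by lra. nra.
    - apply (Rmult_le_reg_r d); [lra|]. unfold Rdiv. rewrite Rmult_assoc, Rinv_l by lra. lra. }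
  unfold stretch_bound, alpha_angle, Dv, cs_m. fold d H X c s.
  rewrite cos_acos by exact Hy. rewrite sin_acos by exact Hy.
  assert (E : sqrt (1 - (H/d)²) = Rabs X / d).
  { replace (1 - (H/d)²) with (Rsqr (X/d)).
    2:{ unfold Rsqr. replace (X/d*(X/d)) with ((X*X)/(d*d)) by (field; lra).
        replace (X*X) with (d*d - H*H) by lra. field. lra. }
    rewrite sqrt_Rsqr_abs. unfold Rdiv. rewrite Rabs_mult, Rabs_inv by lra. rewrite (Rabs_right d) by lra. reflexivity. }
  rewrite E. unfold tan. fold c s. field. split; lra.
Qed.

Theorem mainTheorem8 :
  forall (k : nat) (P : list pt) (u w : pt) (i : nat),
    (1 <= k)%nat ->
    NoDup P ->
    general_position (4 * k + 4) P ->
    In u P -> In w P -> u <> w ->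
    in_cone (4 * k + 4) i u w ->
    exists l : list pt,
      theta_path (4 * k + 4) P u w l /\
      path_length u l <=
        stretch_bound (4 * k + 4) (alpha_angle (4 * k + 4) i u w) * edist u w.
Proof.
  intros k P u w i Hk _ _ Hu Hw Huw Hc.
  destruct (main_ind k P Hk (S (cnt (4*k+4) P (Dv (4*k+4) i u w))) u w i ltac:(lia) Hu Hw Hc)
    as [l [Hwl [Hll Hlen]]].
  destruct (loop_erase _ u l Hwl) as [l' [Hw' [Hnd [Hl' Hlen']]]].
  exists l'. split; [split; [exact Hw'|split; [exact Hnd|rewrite Hl'; exact Hll]]|].
  rewrite (bound_eq k i u w Hk Hc). lra.
Qed.
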